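(* Let $d\ge 1$ be an integer. For each $i\in[d]$ let $x^i=(x^i_1,x^i_2,x^i_3)\in\mathbb{R}^3$ with $x^i_1<x^i_2<x^i_3$, and for each $\mathbf t=(t_1,\dots,t_d)\in[3]^d$ let $z_{\mathbf t}\in\mathbb{R}^{d-1}$. Put $P_{\mathbf t}:=(x^1_{t_1},\dots,x^d_{t_d},z_{\mathbf t})\in\mathbb{R}^{2d-1}$ and, for $i\in[d]$ and $j\in[3]$, define $A^i_j:=\operatorname{conv}\{P_{\mathbf t}: \mathbf t\in[3]^d,\ t_i=j\}$. Then there exist an index $i\in[d]$ and a line $\ell\subset\mathbb{R}^{2d-1}$ such that every point $p\in\ell$ satisfies $p_k=x^k_2$ for all $k\in[d]\setminus\{i\}$ (where $p_k$ is the $k$-th coordinate of $p$), and $\ell$ intersects each of $A^i_1,A^i_2,A^i_3$.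
   Context: $[d]=\{1,\dots,d\}$, $[3]=\{1,2,3\}$. *)

(* Defs.v *)
From HB Require Import structures.
From mathcomp Require Import all_boot all_order all_algebra.
From mathcomp Require Import reals.
Set Implicit Arguments. Unset Strict Implicit. Unset Printing Implicit Defensive.
Import Order.TTheory GRing.Theory Num.Theory.
Local Open Scope ring_scope.

Definition in_conv (R : realType) (T : finType) (m : nat)
    (S : pred T) (P : T -> 'rV[R]_m) (p : 'rV[R]_m) : Prop :=
  exists lam : T -> R,
    [/\ forall t, 0 <= lam t,
        forall t, ~~ S t -> lam t = 0,
        \sum_(t : T) lam t = 1
      & p = \sum_(t : T) lam t *: P t].

Definition Ppt (R : realType) (d : nat) (x : 'I_d -> 'I_3 -> R)
    (z : {ffun 'I_d -> 'I_3} -> 'rV[R]_(d.-1)) (t : {ffun 'I_d -> 'I_3})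
    : 'rV[R]_(d + d.-1) :=
  row_mx (\row_(k < d) x k (t k)) (z t).

Definition coord_first (R : realType) (d : nat) (p : 'rV[R]_(d + d.-1))
    (k : 'I_d) : R := p ord0 (lshift d.-1 k).

(* Main.v *)
Require Import Defs.
From HB Require Import structures.
From mathcomp Require Import all_boot all_order all_algebra.
From mathcomp Require Import reals.
From mathcomp Require Import ring lra zify.
From Stdlib Require Import IndefiniteDescription Classical.
Set Implicit Arguments. Unset Strict Implicit. Unset Printing Implicit Defensive.
Import Order.TTheory GRing.Theory Num.Theory.
Local Open Scope ring_scope.

Definition dot (R : pzRingType) m (u v : 'rV[R]_m) : R := \sum_j u 0 j * v 0 j.


Lemma dotDr (R : comPzRingType) m (u v w : 'rV[R]_m) : dot u (v + w) = dot u v + dot u w.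
Proof. rewrite /dot -big_split; apply: eq_bigr => j _; by rewrite mxE mulrDr. Qed.
Lemma dotDl (R : comPzRingType) m (u v w : 'rV[R]_m) : dot (v + w) u = dot v u + dot w u.
Proof. rewrite /dot -big_split; apply: eq_bigr => j _; by rewrite mxE mulrDl. Qed.
Lemma dotZr (R : comPzRingType) m (u v : 'rV[R]_m) a : dot u (a *: v) = a * dot u v.
Proof. rewrite /dot mulr_sumr; apply: eq_bigr => j _; by rewrite mxE mulrCA. Qed.
Lemma dotZl (R : comPzRingType) m (u v : 'rV[R]_m) a : dot (a *: v) u = a * dot v u.
Proof. rewrite /dot mulr_sumr; apply: eq_bigr => j _; by rewrite mxE mulrA. Qed.
Lemma dot0r (R : comPzRingType) m (u : 'rV[R]_m) : dot u 0 = 0.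
Proof. rewrite /dot big1 // => j _; by rewrite mxE mulr0. Qed.
Lemma dot0l (R : comPzRingType) m (u : 'rV[R]_m) : dot 0 u = 0.
Proof. rewrite /dot big1 // => j _; by rewrite mxE mul0r. Qed.
Lemma dotNr (R : comPzRingType) m (u v : 'rV[R]_m) : dot u (- v) = - dot u v.
Proof. by rewrite -scaleN1r dotZr mulN1r. Qed.
Lemma dotBr (R : comPzRingType) m (u v w : 'rV[R]_m) : dot u (v - w) = dot u v - dot u w.
Proof. by rewrite dotDr dotNr. Qed.
Lemma dot_suml (R : comPzRingType) m (I : finType) (a : I -> R) (h : I -> 'rV[R]_m) q :
  dot (\sum_i a i *: h i) q = \sum_i a i * dot (h i) q.
Proof.
rewrite (big_morph (fun u => dot u q) (fun x y => dotDl q x y) (dot0l q)).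
by apply: eq_bigr => i _; rewrite dotZl.
Qed.
Lemma dot_gt0 (R : realFieldType) m (u : 'rV[R]_m) : u != 0 -> 0 < dot u u.
Proof.
move=> u0; have [j uj] : exists j, u 0 j != 0.
  apply/existsP; apply: contraR u0 => /existsPn H; apply/eqP/rowP => j.
  by rewrite mxE; apply/eqP/negPn/H.
rewrite /dot (bigD1 j) //= ltr_pwDl //.
  by rewrite -expr2 exprn_even_gt0.
by apply: sumr_ge0 => k _; rewrite -expr2 sqr_ge0.
Qed.

Lemma le_sum_term (R : realFieldType) n (F : nat -> R) k : (k < n)%N ->
  (forall j, (j < n)%N -> 0 <= F j) -> F k <= \sum_(j < n) F j.
Proof.
move=> kn F0; rewrite (bigD1 (Ordinal kn)) //= lerDl sumr_ge0 // => j _; exact: F0.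
Qed.

Lemma gordan_nat (R : realFieldType) m n (p : nat -> 'rV[R]_m) :
 (exists w : nat -> R, [/\ forall k, 0 <= w k, \sum_(k < n) w k = 1
                         & \sum_(k < n) w k *: p k = 0])
 \/ (exists h, forall k, (k < n)%N -> 0 < dot h (p k)).
Proof.
elim: n p => [|n IH] p; first by right; exists 0.
have [[w [w0 w1 wp]]|[h hp]] := IH p.
  left; exists (fun k => if (k < n)%N then w k else 0); split.
  - by move=> k; case: ifP.
  - rewrite big_ord_recr /= ltnn addr0; apply: eq_trans w1; apply: eq_bigr => k _; by rewrite ltn_ord.
  - rewrite big_ord_recr /= ltnn scale0r addr0; apply: eq_trans wp; apply: eq_bigr => k _; by rewrite ltn_ord.
set q := p n; set c := dot h q.
have [cpos|cle0] := ltrP 0 c.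
  right; exists h => k; rewrite ltnS leq_eqVlt; case/orP => [/eqP->|]; [done| exact: hp].
have [c0|cneg] : c = 0 \/ c < 0 by move: cle0; rewrite le_eqVlt => /orP[/eqP->|->]; [left|right].
  have [q0|qn0] := eqVneq q 0.
    left; exists (fun k => if k == n then 1 else 0); split.
    - by move=> k; case: ifP.
    - by rewrite big_ord_recr /= eqxx big1 ?add0r // => k _; rewrite ltn_eqF.
    - rewrite big_ord_recr /= eqxx big1 ?add0r ?scale1r // => k _; by rewrite ltn_eqF ?scale0r.
  right.
  pose lam := 1 + \sum_(k < n) `|dot q (p k)| / dot h (p k).
  exists (q + lam *: h) => k; rewrite ltnS leq_eqVlt; case/orP => [/eqP->|kn].
    by rewrite dotDl dotZl -/q -/c c0 mulr0 addr0 dot_gt0.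
  rewrite dotDl dotZl.
  have ak := hp k kn.
  have Hs : `|dot q (p k)| / dot h (p k) <= \sum_(j < n) `|dot q (p j)| / dot h (p j).
    apply: (@le_sum_term R n (fun j => `|dot q (p j)| / dot h (p j)) k kn) => j jn.
    by rewrite divr_ge0 // ltW // hp.
  set r := `|dot q (p k)| / dot h (p k) in Hs.
  have Hr : r * dot h (p k) = `|dot q (p k)| by rewrite /r divfK // gt_eqF.
  have Ha : - dot q (p k) <= `|dot q (p k)| by rewrite -normrN ler_norm.
  rewrite /lam; set s := \sum_(j < n) _ in Hs *.
  nra.
pose a k := dot h (p k).
pose p' k := (a k - c)^-1 *: (a k *: q - c *: p k).
have ac k : (k < n)%N -> 0 < a k - c by move=> kn; have := hp k kn; rewrite /a; lra.
have [[w [w0 w1 wp]]|[g gp]] := IH p'.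
  left; exists (fun k => if (k < n)%N then w k * (- c) / (a k - c)
                  else \sum_(j < n) w j * a j / (a j - c)); split.
  - move=> k; case: ifP => kn.
      by apply: divr_ge0; [apply: mulr_ge0 => //; lra | exact: ltW (ac k kn)].
    apply: sumr_ge0 => j _; apply: divr_ge0; last exact: ltW (ac j (ltn_ord j)).
    by apply: mulr_ge0 => //; apply: ltW; apply: hp.
  - rewrite big_ord_recr /= ltnn; apply: (eq_trans _ w1); rewrite -big_split /=; apply: eq_bigr => k _.
    rewrite ltn_ord; have := ac k (ltn_ord k); set b := a k - c => b0.
    rewrite -!mulrA -mulrDr; rewrite -[X in _ = X]mulr1; congr (_ * _).
    rewrite -mulrDl /b -[X in X / _]addrC mulfV // gt_eqF //.
  - rewrite big_ord_recr /= ltnn scaler_suml; apply: (eq_trans _ wp); rewrite -big_split /=; apply: eq_bigr => k _.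
    rewrite ltn_ord /p' /q; have := ac k (ltn_ord k); set b := a k - c => b0.
    rewrite !scalerA scalerDr scalerN !scalerA; apply/rowP => j; rewrite !mxE.
    field; by rewrite gt_eqF.
right.
pose G := dot g q.
pose r k := (a k - c) * dot g (p' k) / a k.
have rpos k : (k < n)%N -> 0 < r k.
  move=> kn; rewrite /r divr_gt0 ?mulr_gt0 ?ac ?gp //; exact: hp.
pose S := \sum_(k < n) (r k)^-1.
pose del := (1 + S)^-1.
have S0 : 0 <= S by apply: sumr_ge0 => k _; rewrite invr_ge0 ltW // rpos.
have del0 : 0 < del by rewrite /del invr_gt0; lra.
have delr k : (k < n)%N -> del < r k.
  move=> kn; have Hs : (r k)^-1 <= S.
    apply: (@le_sum_term R n (fun j => (r j)^-1) k kn) => j jn; by rewrite invr_ge0 ltW // rpos.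
  have rk := rpos k kn.
  have H1 : r k * (r k)^-1 = 1 by rewrite mulfV // gt_eqF.
  have H2 : del * (1 + S) = 1 by rewrite /del mulVf // gt_eqF //; lra.
  nra.
pose lam := (del - G) / c.
exists (g + lam *: h).
move=> k; rewrite ltnS leq_eqVlt; case/orP => [/eqP->|kn].
  by rewrite dotDl dotZl -/q -/c -/G /lam divfK ?lt_eqF // addrC subrK.
rewrite dotDl dotZl -/(a k).
have ak : 0 < a k by exact: hp.
have key : (a k - c) * dot g (p' k) = a k * G - c * dot g (p k).
  rewrite /p' dotZr mulrA mulfV ?mul1r ?gt_eqF ?ac // dotBr !dotZr //.
have := delr k kn; rewrite /r => Hd.
have Hd' : del * a k < a k * G - c * dot g (p k).
  by rewrite -key; rewrite ltr_pdivlMr in Hd.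
rewrite /lam.
set gpk := dot g (p k) in key Hd' *.
have ci : c^-1 * c = 1 by rewrite mulVf // lt_eqF.
have cin : c^-1 < 0 by rewrite invr_lt0.
have E : gpk + (del - G) / c * a k = c^-1 * (c * gpk + (del - G) * a k).
  by field; rewrite lt_eqF.
rewrite E nmulr_rgt0 //; lra.
Qed.

Lemma sum_enum_nth (V : nmodType) (I : finType) (P : pred I) x0 (F : I -> V) :
  \sum_(i | P i) F i = \sum_(k < size (enum P)) F (nth x0 (enum P) k).
Proof.
transitivity (\sum_(i <- enum P) F i).
  by rewrite big_enum /=.
by rewrite (big_nth x0) big_mkord.
Qed.

Lemma gordan (R : realFieldType) m (I : finType) (P : pred I) (p : I -> 'rV[R]_m) :
 (exists w : I -> R, [/\ forall i, 0 <= w i, forall i, ~~ P i -> w i = 0,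
      \sum_i w i = 1 & \sum_i w i *: p i = 0])
 \/ (exists h, forall i, P i -> 0 < dot h (p i)).
Proof.
case: (pickP P) => [x0 Px0|P0]; last by right; exists 0 => i; rewrite P0.
have ue : uniq (enum P) by exact: enum_uniq.
have [[w [w0 w1 wp]]|[h hp]] := @gordan_nat R m (size (enum P)) (fun k => p (nth x0 (enum P) k)).
  left; exists (fun i => if P i then w (index i (enum P)) else 0); split.
  - by move=> i; case: ifP.
  - by move=> i /negbTE ->.
  - rewrite -big_mkcond (@sum_enum_nth _ _ P x0) /=; apply: eq_trans w1.
    by apply: eq_bigr => k _; rewrite index_uniq.
  - rewrite (eq_bigr (fun i => if P i then w (index i (enum P)) *: p i else 0)); last first.
      by move=> i _; case: ifP => //; rewrite scale0r.
    rewrite -big_mkcond (@sum_enum_nth _ _ P x0) /=; apply: eq_trans wp.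
    by apply: eq_bigr => k _; rewrite index_uniq.
right; exists h => i Pi.
have ie : i \in enum P by rewrite mem_enum.
have := hp (index i (enum P)); rewrite index_mem ie nth_index //; exact.
Qed.

Lemma cube (R : realFieldType) d (hd : (0 < d)%N) (Q : {set 'I_d} -> 'rV[R]_(d.-1)) :
 exists i : 'I_d, exists w : {set 'I_d} * {set 'I_d} -> R,
  [/\ forall ST : {set 'I_d} * {set 'I_d}, 0 <= w ST,
      forall ST : {set 'I_d} * {set 'I_d}, ~~ ((i \in ST.1) && (i \notin ST.2)) -> w ST = 0,
      \sum_(ST : {set 'I_d} * {set 'I_d}) w ST = 1
    & \sum_(ST : {set 'I_d} * {set 'I_d}) w ST *: (Q ST.1 - Q ST.2) = 0].
Proof.
apply: NNPP => Hn.
have Hr : forall i : 'I_d, exists h : 'rV[R]_(d.-1), forall ST : {set 'I_d} * {set 'I_d},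
    (i \in ST.1) && (i \notin ST.2) -> 0 < dot h (Q ST.1 - Q ST.2).
  move=> i.
  have [[w Hw]|//] := @gordan R (d.-1) _ (fun ST : {set 'I_d} * {set 'I_d} => (i \in ST.1) && (i \notin ST.2))
                        (fun ST => Q ST.1 - Q ST.2).
  by case: Hn; exists i, w.
have [h hP] := functional_choice _ Hr.
pose H : 'M[R]_(d, d.-1) := \matrix_i h i.
have rk : (0 < \rank (kermx H))%N.
  by rewrite mxrank_ker; have := rank_leq_col H; lia.
have [k rk0] : exists k, row k (kermx H) != 0.
  apply: NNPP => Hk; move: rk; rewrite lt0n mxrank_eq0 => /negP; apply.
  apply/eqP/row_matrixP => k; rewrite row0; apply: NNPP => /eqP Hk'; apply: Hk; by exists k.
set a := row k (kermx H) in rk0.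
have aH : \sum_i a 0 i *: h i = 0.
  have : a *m H = 0 by rewrite /a -row_mul mulmx_ker row0.
  by rewrite mulmx_sum_row; under eq_bigr do rewrite rowK.
have [i0 ai0] : exists i0, a 0 i0 != 0.
  apply: NNPP => Hi; move/negP: rk0; apply; apply/eqP/matrixP => i j.
  rewrite (ord1 i) [X in _ = X]mxE; apply/eqP/negPn/negP => Hj; apply: Hi; by exists j.
pose S := [set i | 0 < a 0 i].
pose q := Q S - Q (~: S).
have E : \sum_i a 0 i * dot (h i) q = 0 by rewrite -dot_suml aH dot0l.
have pos i : 0 <= a 0 i * dot (h i) q /\ (a 0 i != 0 -> 0 < a 0 i * dot (h i) q).
  have [an|ap|a0] := ltgtP (a 0 i) 0.
  - have hq : 0 < dot (h i) (Q (~: S) - Q S).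
      by apply: (hP i (~: S, S)); rewrite /= !inE (lt_gtF an).
    have : 0 < a 0 i * dot (h i) q.
      by rewrite /q -opprB dotNr mulrN -mulNr mulr_gt0 // oppr_gt0.
    by move=> H0; split => [|_] //; exact: ltW.
  - have hq : 0 < dot (h i) q.
      by apply: (hP i (S, ~: S)); rewrite /= !inE ap.
    have : 0 < a 0 i * dot (h i) q by rewrite mulr_gt0.
    by move=> H0; split => [|_] //; exact: ltW.
  - by rewrite a0 mul0r lexx; split => //; rewrite eqxx.
have : 0 < \sum_i a 0 i * dot (h i) q.
  rewrite (bigD1 i0) //= ltr_pwDl //; first by apply: (pos i0).2.
  by apply: sumr_ge0 => i _; exact: (pos i).1.
by rewrite E ltxx.
Qed.

Lemma sum3 (V : nmodType) (F : 'I_3 -> V) : \sum_j F j = F 0 + F 1 + F 2.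
Proof.
rewrite !big_ord_recr big_ord0 /= add0r.
by congr (F _ + F _ + F _); apply: val_inj.
Qed.

Lemma case3 (j : 'I_3) : j = 0 \/ j = 1 \/ j = 2.
Proof. case: j => [[|[|[|//]]]] Hj; [left|right;left|right;right]; by apply: val_inj. Qed.

Definition lamx (R : realType) d (x : 'I_d -> 'I_3 -> R) k :=
  (x k 2 - x k 1) / (x k 2 - x k 0).

Lemma lam_facts (R : realType) d (x : 'I_d -> 'I_3 -> R) k :
  x k 0 < x k 1 /\ x k 1 < x k 2 ->
  [/\ 0 < lamx x k, lamx x k < 1 & lamx x k * x k 0 + (1 - lamx x k) * x k 2 = x k 1].
Proof.
case=> h1 h2; have h3 : 0 < x k 2 - x k 0 by lra.
split; rewrite /lamx.
- by rewrite divr_gt0 //; lra.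
- by rewrite ltr_pdivrMr // mul1r; lra.
- by field; lra.
Qed.

Definition mS (R : realType) d (x : 'I_d -> 'I_3 -> R) (S : {set 'I_d}) (k : 'I_d)
   (j : 'I_3) : R :=
  if k \in S then (if j == 0 then lamx x k else if j == 2 then 1 - lamx x k else 0)
  else (if j == 1 then 1 else 0).

Definition mu (R : realType) d (x : 'I_d -> 'I_3 -> R) (S : {set 'I_d})
  (t : {ffun 'I_d -> 'I_3}) : R := \prod_k mS x S k (t k).

Lemma mS_ge0 (R : realType) d (x : 'I_d -> 'I_3 -> R)
  (hx : forall i : 'I_d, x i 0 < x i 1 /\ x i 1 < x i 2) S k j : 0 <= mS x S k j.
Proof.
have [l0 l1 _] := lam_facts (hx k).
rewrite /mS; case: ifP => _; repeat case: ifP => _ //; lra.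
Qed.

Lemma mS_sum1 (R : realType) d (x : 'I_d -> 'I_3 -> R) S k : \sum_j mS x S k j = 1.
Proof. rewrite sum3 /mS; case: ifP => _ /=; lra. Qed.

Lemma mS_sumx (R : realType) d (x : 'I_d -> 'I_3 -> R)
  (hx : forall i : 'I_d, x i 0 < x i 1 /\ x i 1 < x i 2) S k :
  \sum_j mS x S k j * x k j = x k 1.
Proof.
have [l0 l1 le] := lam_facts (hx k).
rewrite sum3 /mS; case: ifP => _ /=; lra.
Qed.

Lemma mu_ge0 (R : realType) d (x : 'I_d -> 'I_3 -> R)
  (hx : forall i : 'I_d, x i 0 < x i 1 /\ x i 1 < x i 2) S t : 0 <= mu x S t.
Proof. by apply: prodr_ge0 => k _; apply: mS_ge0. Qed.

Lemma mu_prod (R : realType) d (x : 'I_d -> 'I_3 -> R) S (f : 'I_d -> 'I_3 -> R) :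
  \sum_t mu x S t * \prod_k f k (t k) = \prod_k \sum_j mS x S k j * f k j.
Proof.
rewrite bigA_distr_bigA /=; apply: eq_bigr => t _; by rewrite /mu -big_split.
Qed.

Lemma mu_one (R : realType) d (x : 'I_d -> 'I_3 -> R) S i (g : 'I_3 -> R) :
  \sum_t mu x S t * g (t i) = \sum_j mS x S i j * g j.
Proof.
have E t : g (t i) = \prod_k (if k == i then g (t k) else 1).
  by rewrite (bigD1 i) //= eqxx big1 ?mulr1 // => k /negbTE ->.
under eq_bigr do rewrite E.
rewrite (mu_prod x S (fun k j => if k == i then g j else 1)).
rewrite (bigD1 i) //= [X in _ * X]big1 ?mulr1; first by apply: eq_bigr => j _; rewrite eqxx.
move=> k /negbTE ki; under eq_bigr do rewrite ki mulr1; exact: mS_sum1.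
Qed.

Lemma mu_two (R : realType) d (x : 'I_d -> 'I_3 -> R) S i k (g h : 'I_3 -> R) :
  k != i -> \sum_t mu x S t * (g (t i) * h (t k)) =
    (\sum_j mS x S i j * g j) * (\sum_j mS x S k j * h j).
Proof.
move=> ki.
pose f l j := (if l == i then g j else 1) * (if l == k then h j else 1).
have E t : g (t i) * h (t k) = \prod_l f l (t l).
  rewrite (bigD1 i) //= (bigD1 k) //= [X in _ * (_ * X)]big1 ?mulr1; last first.
    by move=> l /andP[/negbTE li /negbTE lk]; rewrite /f li lk mulr1.
  by rewrite /f eqxx (negbTE ki) eq_sym (negbTE ki) eqxx mulr1 mul1r.
under eq_bigr do rewrite E.
rewrite mu_prod (bigD1 i) //= (bigD1 k) //= [X in _ * (_ * X)]big1 ?mulr1; last first.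
  move=> l /andP[/negbTE li /negbTE lk]; rewrite /f.
  under eq_bigr do rewrite li lk !mulr1; exact: mS_sum1.
congr (_ * _); apply: eq_bigr => j _; rewrite /f ?eqxx ?(negbTE ki) ?mulr1 //.
  by rewrite eq_sym (negbTE ki) mulr1.
by rewrite mul1r.
Qed.

Lemma mu_zero (R : realType) d (x : 'I_d -> 'I_3 -> R) S i (t : {ffun 'I_d -> 'I_3}) :
  mS x S i (t i) = 0 -> mu x S t = 0.
Proof. by move=> H; rewrite /mu (bigD1 i) //= H mul0r. Qed.

Lemma sumP (R : realType) d (x : 'I_d -> 'I_3 -> R)
  (z : {ffun 'I_d -> 'I_3} -> 'rV[R]_(d.-1)) (c : {ffun 'I_d -> 'I_3} -> R) :
  \sum_t c t *: Ppt x z t = row_mx (\row_k \sum_t c t * x k (t k)) (\sum_t c t *: z t).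
Proof.
apply/rowP => jj; rewrite summxE -(splitK jj).
case: (split jj) => k /=; rewrite ?row_mxEl ?row_mxEr ?mxE ?summxE;
  apply: eq_bigr => t _; rewrite mxE /Ppt ?row_mxEl ?row_mxEr ?mxE //.
Qed.

Lemma coord_sum (R : realType) d (x : 'I_d -> 'I_3 -> R)
  (z : {ffun 'I_d -> 'I_3} -> 'rV[R]_(d.-1)) (c : {ffun 'I_d -> 'I_3} -> R) k :
  coord_first (\sum_t c t *: Ppt x z t) k = \sum_t c t * x k (t k).
Proof. by rewrite sumP /coord_first row_mxEl mxE. Qed.

Lemma sum_ind (R : realType) (F : 'I_3 -> R) j0 : \sum_j F j * (j == j0)%:R = F j0.
Proof.
rewrite (bigD1 j0) //= eqxx mulr1 big1 ?addr0 // => j /negbTE ->; by rewrite mulr0.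
Qed.

Lemma mS_in (R : realType) d (x : 'I_d -> 'I_3 -> R) (S S' : {set 'I_d}) i j :
  i \in S -> i \in S' -> mS x S i j = mS x S' i j.
Proof. by rewrite /mS => -> ->. Qed.

Lemma mS_out (R : realType) d (x : 'I_d -> 'I_3 -> R) (S : {set 'I_d}) i j :
  i \notin S -> mS x S i j = (j == 1)%:R.
Proof. by rewrite /mS => /negbTE ->; case: ifP. Qed.

Lemma coord_lin (R : realType) d (A B : 'rV[R]_(d + d.-1)) s k :
  coord_first (A + s *: (B - A)) k = coord_first A k + s * (coord_first B k - coord_first A k).
Proof. by rewrite /coord_first !mxE. Qed.

Theorem proposition5 (R : realType) (d : nat) (hd : (0 < d)%N)
    (x : 'I_d -> 'I_3 -> R)
    (hx : forall i : 'I_d, x i 0 < x i 1 /\ x i 1 < x i 2)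
    (z : {ffun 'I_d -> 'I_3} -> 'rV[R]_(d.-1)) :
  exists (i : 'I_d) (a v : 'rV[R]_(d + d.-1)),
    [/\ v != 0,
        forall (s : R) (k : 'I_d), k != i -> coord_first (a + s *: v) k = x k 1
      & forall j : 'I_3, exists s : R,
          in_conv (fun t : {ffun 'I_d -> 'I_3} => t i == j) (Ppt x z) (a + s *: v)].
Proof.
pose Q (S : {set 'I_d}) := \sum_t mu x S t *: z t.
have [i [w [w0 wsupp w1 wQ]]] := @cube R d hd Q.
have [l0 l1 lx] := lam_facts (hx i).
set l := lamx x i in l0 l1 lx.
pose beta t := \sum_(ST : {set 'I_d} * {set 'I_d}) w ST * mu x ST.1 t.
pose alpha t := \sum_(ST : {set 'I_d} * {set 'I_d}) w ST * mu x ST.2 t.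
have wsum : forall (sel : {set 'I_d} * {set 'I_d} -> {set 'I_d})
    (G : {ffun 'I_d -> 'I_3} -> R) (c : R),
   (forall ST : {set 'I_d} * {set 'I_d}, (i \in ST.1) && (i \notin ST.2) -> \sum_t mu x (sel ST) t * G t = c) ->
   \sum_t (\sum_(ST : {set 'I_d} * {set 'I_d}) w ST * mu x (sel ST) t) * G t = c.
  move=> sel G c Hc.
  under eq_bigr do rewrite mulr_suml.
  rewrite exchange_big /= (eq_bigr (fun ST => w ST * c)).
    by rewrite -mulr_suml w1 mul1r.
  move=> ST _; have [HST|HST] := boolP ((i \in ST.1) && (i \notin ST.2)).
    by rewrite -(Hc ST HST) mulr_sumr; apply: eq_bigr => t _; rewrite mulrA.
  by rewrite wsupp // mul0r; apply: big1 => t _; rewrite !mul0r.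
have beta0 t : 0 <= beta t.
  by apply: sumr_ge0 => ST _; rewrite mulr_ge0 // mu_ge0.
have alpha0 t : 0 <= alpha t.
  by apply: sumr_ge0 => ST _; rewrite mulr_ge0 // mu_ge0.
have hbz : \sum_t beta t *: z t = \sum_t alpha t *: z t.
  have E (sel : {set 'I_d} * {set 'I_d} -> {set 'I_d}) :
      \sum_t (\sum_(ST : {set 'I_d} * {set 'I_d}) w ST * mu x (sel ST) t) *: z t
      = \sum_(ST : {set 'I_d} * {set 'I_d}) w ST *: Q (sel ST).
    under eq_bigr do rewrite scaler_suml.
    rewrite exchange_big; apply: eq_bigr => ST _; rewrite /Q scaler_sumr.
    by apply: eq_bigr => t _; rewrite scalerA.
  rewrite /beta /alpha !E; apply/eqP; rewrite -subr_eq0 -sumrB; apply/eqP.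
  by apply: eq_trans wQ; apply: eq_bigr => ST _; rewrite scalerBr.
have hbx k : \sum_t beta t * x k (t k) = x k 1.
  by apply: wsum => ST _; rewrite (mu_one x _ k (x k)) mS_sumx.
have hax k : \sum_t alpha t * x k (t k) = x k 1.
  by apply: wsum => ST _; rewrite (mu_one x _ k (x k)) mS_sumx.
have ha1 : \sum_t alpha t = 1.
  rewrite -[RHS](wsum snd (fun _ => 1)); first by apply: eq_bigr => t _; rewrite mulr1.
  move=> ST _; have := mu_one x ST.2 i (fun _ => 1); rewrite /= => ->.
  under eq_bigr do rewrite mulr1; exact: mS_sum1.
pose cc j0 := mS x [set i] i j0.
have cc0 : cc 0 = l by rewrite /cc /mS set11.
have cc2 : cc 2 = 1 - l by rewrite /cc /mS set11.
have hbj j0 : \sum_t beta t * (t i == j0)%:R = cc j0.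
  apply: wsum => ST /andP[HS _].
  rewrite (mu_one x _ i (fun j => (j == j0)%:R)) sum_ind; apply: mS_in => //.
  by rewrite set11.
have hbjx j0 k : k != i -> \sum_t beta t * ((t i == j0)%:R * x k (t k)) = cc j0 * x k 1.
  move=> ki; apply: wsum => ST /andP[HS _].
  rewrite (mu_two x _ (fun j => (j == j0)%:R) (x k) ki) sum_ind mS_sumx //.
  by rewrite (@mS_in _ _ x _ [set i]) // set11.
have hbji j0 : \sum_t beta t * ((t i == j0)%:R * x i (t i)) = cc j0 * x i j0.
  apply: wsum => ST /andP[HS _].
  rewrite (mu_one x _ i (fun j => (j == j0)%:R * x i j)).
  under eq_bigr do rewrite [_ * x i _]mulrC mulrA.
  by rewrite sum_ind (@mS_in _ _ x _ [set i]) // set11.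
pose betaj j0 t := beta t * ((t i == j0)%:R / cc j0).
have conv02 j0 : 0 < cc j0 ->
    in_conv (fun t : {ffun 'I_d -> 'I_3} => t i == j0) (Ppt x z)
            (\sum_t betaj j0 t *: Ppt x z t).
  move=> cpos; exists (betaj j0); split => //.
  - by move=> t; rewrite /betaj mulr_ge0 // divr_ge0 // ltW.
  - by move=> t /negbTE; rewrite /betaj => ->; rewrite mul0r mulr0.
  - under eq_bigr do rewrite /betaj mulrA.
    by rewrite -mulr_suml hbj mulfV // gt_eqF.
have coordj j0 k : 0 < cc j0 -> coord_first (\sum_t betaj j0 t *: Ppt x z t) k =
    if k == i then x i j0 else x k 1.
  move=> cpos; rewrite coord_sum.
  rewrite (eq_bigr (fun t => beta t * ((t i == j0)%:R * x k (t k)) / cc j0)); last first.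
    by move=> t _; rewrite /betaj; ring.
  rewrite -mulr_suml; case: eqP => [->|/eqP ki].
    by rewrite hbji mulrAC mulfV ?mul1r // gt_eqF.
  by rewrite hbjx // mulrAC mulfV ?mul1r // gt_eqF.
have c0 : 0 < cc 0 by rewrite cc0.
have c2 : 0 < cc 2 by rewrite cc2; lra.
set U := \sum_t betaj 0 t *: Ppt x z t.
set W := \sum_t betaj 2 t *: Ppt x z t.
exists i, U, (W - U); split.
- apply/eqP => hv; have := congr1 (fun p => coord_first p i) hv.
  have := coordj 0 i c0; have := coordj 2 i c2; rewrite eqxx -/U -/W.
  rewrite /coord_first !mxE => -> ->; have [h1 h2] := hx i; lra.
- move=> s k ki; rewrite coord_lin coordj // coordj // (negbTE ki).
  by rewrite subrr mulr0 addr0.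
move=> j; have [->|[->|->]] := case3 j.
- by exists 0; rewrite scale0r addr0; apply: conv02.
- exists (1 - l); exists alpha; split => //.
  + move=> t ti; apply: big1 => ST _.
    have [HST|HST] := boolP ((i \in ST.1) && (i \notin ST.2)); last by rewrite wsupp // mul0r.
    case/andP: HST => _ HS; rewrite (@mu_zero _ _ x _ i) ?mulr0 // mS_out //.
    by rewrite (negbTE ti).
  + have -> : U + (1 - l) *: (W - U) = \sum_t beta t *: Ppt x z t.
      have -> : U + (1 - l) *: (W - U) = l *: U + (1 - l) *: W.
        by apply/rowP => jj; rewrite !mxE; ring.
      rewrite /U /W !scaler_sumr -big_split /=; apply: eq_bigr => t _.
      rewrite !scalerA -scalerDl; congr (_ *: _).
      rewrite /betaj cc0 cc2.
      have [ti|[ti|ti]] := case3 (t i); rewrite ti /=.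
      * by field; lra.
      * rewrite !mul0r !mulr0 addr0 /beta; symmetry; apply: big1 => ST _.
        have [HST|HST] := boolP ((i \in ST.1) && (i \notin ST.2)); last by rewrite wsupp // mul0r.
        case/andP: HST => HS _; rewrite (@mu_zero _ _ x _ i) ?mulr0 // ti /mS HS //.
      * by field; lra.
    rewrite !sumP hbz; congr row_mx; apply/rowP => k; by rewrite !mxE hbx hax.
- exists 1; rewrite scale1r addrC subrK; exact: conv02.
Qed.
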